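(* Let $(\Psi,\vec u,E)$ be a GCD-to-DIV triple with witnessing variable families $\vec z,\vec y,\vec w$. If $\Psi$ is not in increasing form (for any order), then there is a non-constant polynomial $f$ that is the primitive part of a left-hand side of a divisibility of $\Psi$ such that $M_f(\Psi)\cap\mathbb Z\ne\{0\}$ (here $\mathbb Z$ denotes the constant polynomials). If $\Psi$ is in increasing form, then $\Psi$ is in increasing form for every total order in which all variables of $\vec z$ precede all variables of $\vec y$, which precede all variables of $\vec w$ (i.e. $\Psi$ is $3$-increasing with partition $\vec z,\vec y,\vec w$).
   Context: For integers $a\mid b$ means there is a unique $q$ with $b=qa$. A system of divisibility constraints is $\bigwedge_i f_i\mid g_i$ with linear integer polynomials $f_i\neq0$. A linear polynomial is primitive if non-zero with coefficients and constant having gcd $1$; the primitive part of non-zero $g$ is the primitive $f$ with $g=\gcd(g)f$; $\mathbb Zf=\{bf:b\in\mathbb Z\}$. GCD-to-DIV triple: $(\Psi,\vec u,E)$ such that there are $d,m\in\mathbb N$ and three disjoint families of variables $\vec z,\vec y,\vec w$ with: (1) $\Psi(\vec z,\vec y,\vec w)$ is a system of divisibility constraints in $m$ variables, $\vec u\in\mathbb Z^d$, $E\in\mathbb Z^{d\times m}$, each column of $E$ corresponding to a variable of $\Psi$; (2) each divisibility of $\Psi$ has the form $h(\vec z)\mid f(\vec y)$ or $f(\vec y)\mid g(\vec w)$ with $g$ non-constant, all polynomials have only non-negative coefficients and constants, and every left-hand side has a strictly positive constant; (3) each variable $z$ of $\vec z$ appears in a single polynomial of $\Psi$, which has the form $z+c$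 with $c$ a positive integer and occurs in exactly two divisibilities (as left-hand side); (4) each variable $w$ of $\vec w$ appears in exactly two polynomials, of the forms $w$ and $w+c$ with $c$ a positive integer, each occurring exactly once in $\Psi$ (as right-hand sides); (5) every column of $E$ corresponding to a variable of $\vec z$ or $\vec w$ is zero. For primitive $f$, $M_f(\Psi)$ is the smallest set of linear polynomials containing $f$, closed under integer linear combinations, and such that whenever $g\mid h$ is a constraint of $\Psi$ and $bg\in M_f(\Psi)$ for some $b\in\mathbb Z$, then $bh\in M_f(\Psi)$. For a total order $x_1\preceq\dots\preceq x_n$, $\mathrm{lv}(f)$ is the largest variable with non-zero coefficient; $\Psi$ is in increasing form for $\preceq$ if for every $k$ and primitive $f$ with $\mathrm{lv}(f)=x_k$, $M_f(\Psi)\cap\mathbb Z[x_1,\dots,x_k]=\mathbb Zf$; $\Psi$ is in increasing form if it is so for some total order. *)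

(* Defs.v *)
From HB Require Import structures.
From mathcomp Require Import all_boot all_order all_fingroup all_algebra.
Set Implicit Arguments. Unset Strict Implicit. Unset Printing Implicit Defensive.
Import Order.TTheory GRing.Theory Num.Theory.
Local Open Scope ring_scope.

(* A linear integer polynomial in the m variables x_0 .. x_{m-1}:
   (vector of coefficients, constant term).  It is a zmodType, so
   integer linear combinations are available (g *~ b, g + h). *)
Definition lin (m : nat) := ({ffun 'I_m -> int} * int)%type.

Definition coef {m} (p : lin m) (i : 'I_m) : int := p.1 i.
Definition cst {m} (p : lin m) : int := p.2.

Definition linX {m} (i : 'I_m) : lin m := ([ffun j => ((j == i) : nat)%:Z], 0).
Definition linC {m} (c : int) : lin m := (0, c).

Definition nonconstant {m} (p : lin m) : Prop := exists i, coef p i != 0.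
Definition is_constant {m} (p : lin m) : Prop := forall i, coef p i = 0.

Definition vars_in {m} (P : 'I_m -> Prop) (p : lin m) : Prop :=
  forall i, coef p i != 0 -> P i.

Definition lingcd {m} (p : lin m) : int :=
  gcdz (cst p) (\big[gcdz/0]_(i < m) coef p i).

Definition primitive {m} (p : lin m) : Prop := p != 0 /\ lingcd p = 1.

Definition primitive_part_of {m} (f g : lin m) : Prop :=
  g != 0 /\ primitive f /\ g = f *~ lingcd g.

(* A system of divisibility constraints  /\_i f_i | g_i  (pairs (f_i, g_i)) *)
Definition divsys (m : nat) := seq (lin m * lin m).

Definition is_divsys {m} (Psi : divsys m) : Prop :=
  forall e, e \in Psi -> e.1 != 0.

Inductive inM {m} (Psi : divsys m) (f : lin m) : lin m -> Prop :=
| inM_base : inM Psi f f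
| inM_zero : inM Psi f 0
| inM_add : forall g h, inM Psi f g -> inM Psi f h -> inM Psi f (g + h)
| inM_scale : forall (b : int) g, inM Psi f g -> inM Psi f (g *~ b)
| inM_div : forall g h (b : int), (g, h) \in Psi ->
    inM Psi f (g *~ b) -> inM Psi f (h *~ b).

(* A total order on the variables is given by a permutation s:
   s i is the position of variable i, so x_i <= x_j iff s i <= s j. *)
Definition lv_is {m} (s : {perm 'I_m}) (f : lin m) (k : 'I_m) : Prop :=
  coef f k != 0 /\ forall j, coef f j != 0 -> (s j <= s k)%N.

Definition in_prefix {m} (s : {perm 'I_m}) (k : 'I_m) (p : lin m) : Prop :=
  forall j, coef p j != 0 -> (s j <= s k)%N.

Definition increasing_for {m} (Psi : divsys m) (s : {perm 'I_m}) : Prop :=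
  forall (k : 'I_m) (f : lin m), primitive f -> lv_is s f k ->
    forall g, (inM Psi f g /\ in_prefix s k g) <-> exists b : int, g = f *~ b.

Definition increasing_form {m} (Psi : divsys m) : Prop :=
  exists s, increasing_for Psi s.

Definition nonneg_lin {m} (p : lin m) : Prop :=
  (forall i, 0 <= coef p i) /\ 0 <= cst p.

Inductive vkind := VZ | VY | VW.

Definition polys_of {m} (Psi : divsys m) : seq (lin m) :=
  flatten [seq [:: e.1; e.2] | e <- Psi].

(* (Psi, u, E) is a GCD-to-DIV triple, with witnessing families given by
   cls : each variable is in exactly one of z (VZ), y (VY), w (VW). *)
Definition gcd_to_div (d m : nat) (Psi : divsys m) (u : 'cV[int]_d)
    (E : 'M[int]_(d, m)) (cls : 'I_m -> vkind) : Prop :=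
  is_divsys Psi /\
  (forall e, e \in Psi ->
     ((vars_in (fun i => cls i = VZ) e.1 /\ vars_in (fun i => cls i = VY) e.2)
      \/ (vars_in (fun i => cls i = VY) e.1 /\ vars_in (fun i => cls i = VW) e.2
          /\ nonconstant e.2))
     /\ nonneg_lin e.1 /\ nonneg_lin e.2 /\ 0 < cst e.1) /\
  (forall z, cls z = VZ -> exists c : int, 0 < c /\
     (forall q, q \in polys_of Psi -> coef q z != 0 -> q = linX z + linC c) /\
     count (fun e => e.1 == linX z + linC c) Psi = 2%N /\
     count (fun e => e.2 == linX z + linC c) Psi = 0%N) /\
  (forall w, cls w = VW -> exists c : int, 0 < c /\
     (forall q, q \in polys_of Psi -> coef q w != 0 ->
        q = linX w \/ q = linX w + linC c) /\
     count (fun e => e.2 == linX w) Psi = 1%N /\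
     count (fun e => e.1 == linX w) Psi = 0%N /\
     count (fun e => e.2 == linX w + linC c) Psi = 1%N /\
     count (fun e => e.1 == linX w + linC c) Psi = 0%N) /\
  (forall j, cls j = VZ \/ cls j = VW -> forall i, E i j = 0).

(* Main.v *)
Require Import Defs.
From mathcomp Require Import all_boot all_order all_fingroup all_algebra.
From Stdlib Require Import Classical.
Import GRing.Theory Num.Theory.
Local Open Scope ring_scope.
Set Implicit Arguments. Unset Strict Implicit.

Lemma lcoefMz m (p : lin m) b i : coef (p *~ b) i = coef p i * b.
Proof. by rewrite /coef raddfMz /= ffunMzE mulrzz. Qed.
Lemma lcstMz m (p : lin m) b : cst (p *~ b) = cst p * b.
Proof. by rewrite /cst raddfMz mulrzz. Qed.
Lemma lcoefD m (p q : lin m) i : coef (p + q) i = coef p i + coef q i.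
Proof. by rewrite /coef /= ffunE. Qed.
Lemma lcstD m (p q : lin m) : cst (p + q) = cst p + cst q.
Proof. by []. Qed.
Lemma lcoef0 m i : coef (0 : lin m) i = 0.
Proof. by rewrite /coef /= ffunE. Qed.
Lemma lcoefN m (p : lin m) i : coef (- p) i = - coef p i.
Proof. by rewrite /coef /= ffunE. Qed.
Lemma lin_eq m (p q : lin m) : (forall i, coef p i = coef q i) -> cst p = cst q -> p = q.
Proof. case: p q => [p1 p2] [q1 q2] /= H; rewrite /cst /= => ->; congr pair; apply/ffunP => i; exact: H. Qed.

Lemma linMz_eq0 m (p : lin m) b : p *~ b = 0 -> p != 0 -> b = 0.
Proof.
move=> E Hp; case: (b =P 0) => // /eqP Hb; exfalso; move/negP: Hp; apply; apply/eqP.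
apply: lin_eq => [i|].
  have := congr1 (fun q => coef q i) E; rewrite lcoefMz lcoef0 => /eqP.
  by rewrite mulf_eq0 (negbTE Hb) orbF => /eqP ->.
have := congr1 cst E; rewrite lcstMz => /eqP.
by rewrite mulf_eq0 (negbTE Hb) orbF => /eqP H; exact: H.
Qed.

Lemma linMz_inj m (p q : lin m) b : p *~ b = q *~ b -> b != 0 -> p = q.
Proof.
move=> E Hb; case: (p - q =P 0) => [/eqP|/eqP H]; first by rewrite subr_eq0 => /eqP.
exfalso; apply: (negP Hb); apply/eqP; apply: (@linMz_eq0 _ (p - q) b _ H).
by rewrite mulrzBl E subrr.
Qed.

Lemma vars_in_coef0 m (P : 'I_m -> Prop) p i : vars_in P p -> ~ P i -> coef p i = 0.
Proof. move=> H NP; case: (coef p i =P 0) => // /eqP Hc; case: NP; exact: H i Hc. Qed.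

Lemma inM_trans m (Psi : divsys m) f f' x : inM Psi f' f -> inM Psi f x -> inM Psi f' x.
Proof.
move=> H; elim => [||g h _ Hg _ Hh|b g _ Hg|g h b Hgh _ Hg].
- exact: H.
- exact: inM_zero.
- exact: inM_add.
- exact: inM_scale.
- exact: inM_div Hgh Hg.
Qed.

Inductive inSpan {m} (S : lin m -> Prop) : lin m -> Prop :=
| sp0 : inSpan S 0
| spG q : S q -> inSpan S q
| spD p q : inSpan S p -> inSpan S q -> inSpan S (p + q)
| spZ b p : inSpan S p -> inSpan S (p *~ b).

Lemma inSpan_coef m (S : lin m -> Prop) i r :
  (forall q, S q -> coef q i = 0) -> inSpan S r -> coef r i = 0.
Proof.
move=> HS; elim => [|q /HS //|p q _ Hp _ Hq|b p _ Hp].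
- exact: lcoef0.
- by rewrite lcoefD Hp Hq addr0.
- by rewrite lcoefMz Hp mul0r.
Qed.

Lemma inSpan_False m (r : lin m) : inSpan (fun _ => False) r -> r = 0.
Proof. by elim => // [p q _ -> _ ->|b p _ ->]; rewrite ?addr0 ?mul0rz. Qed.

Lemma inv_gen m (Psi : divsys m) (f : lin m) (S : lin m -> Prop) :
  (forall g h b a r, (g,h) \in Psi -> inSpan S r -> g *~ b = f *~ a + r ->
     inM Psi f (g *~ b) -> exists a' r', inSpan S r' /\ h *~ b = f *~ a' + r') ->
  forall x, inM Psi f x -> exists a r, inSpan S r /\ x = f *~ a + r.
Proof.
move=> HD x; elim.
- by exists 1, 0; split; [constructor|rewrite mulr1z addr0].
- by exists 0, 0; split; [constructor|rewrite mulr0z addr0].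
- move=> g h _ [a1 [r1 [S1 ->]]] _ [a2 [r2 [S2 ->]]].
  exists (a1 + a2), (r1 + r2); split; first by apply: spD.
  by rewrite mulrzDr addrACA.
- move=> b g _ [a [r [Sr ->]]]; exists (a * b), (r *~ b); split; first by apply: spZ.
  by rewrite mulrzDl mulrzA.
- move=> g h b Hgh Hi [a [r [Sr E]]]; exact: (HD g h b a r Hgh Sr E Hi).
Qed.

Lemma lingcdM m (p : lin m) c : lingcd (p *~ c) = lingcd p * (`|c|%N)%:Z.
Proof.
rewrite /lingcd lcstMz.
have -> : \big[gcdz/0]_(i < m) coef (p *~ c) i = (\big[gcdz/0]_(i < m) coef p i) * (`|c|%N)%:Z.
  elim/big_rec2: _ => [|i y1 y2 _ ->]; first by rewrite mul0r.
  by rewrite lcoefMz mulz_gcdl /gcdz !abszM.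
by rewrite mulz_gcdl /gcdz !abszM.
Qed.

Lemma parallel m (f g : lin m) a b : primitive f -> g != 0 -> g *~ b = f *~ a -> b != 0 ->
  primitive_part_of f g \/ primitive_part_of (- f) g.
Proof.
move=> [fn0 fg] gn0 E bn0.
set L := lingcd g.
have HL : L * (`|b|%N)%:Z = (`|a|%N)%:Z.
  by rewrite -lingcdM E lingcdM fg mul1r.
have L0 : 0 <= L by rewrite /L /lingcd /gcdz.
have : `|a| == `|L * b|.
  by rewrite normrM (ger0_norm L0) -!abszE HL.
rewrite eqr_norm2 => /orP [] /eqP Ha.
- left; split => //; split => //.
  apply: (@linMz_inj _ _ _ b) => //; rewrite E Ha mulrzA //.
- right; split => //; split.
    split; first by rewrite oppr_eq0.
    by rewrite -mulrN1z lingcdM fg.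
  apply: (@linMz_inj _ _ _ b) => //; by rewrite E Ha -mulrzA mulNrz mulrNz.
Qed.

Definition Hyp m (Psi : divsys m) : Prop :=
  forall e f g, e \in Psi -> nonconstant f -> primitive_part_of f e.1 ->
    inM Psi f g -> is_constant g -> g = 0.

Lemma NC m (Psi : divsys m) f x : is_divsys Psi -> Hyp Psi -> primitive f ->
  nonconstant f -> inM Psi f x -> is_constant x -> x = 0.
Proof.
move=> Hd H Pf Nf Hx Cx.
case: (classic (exists e, e \in Psi /\ (primitive_part_of f e.1 \/ primitive_part_of (- f) e.1))).
  move=> [e [He [Hp|Hp]]]; first exact: (H e f x).
  apply: (H e (- f) x) => //.
    by case: Nf => i Hi; exists i; rewrite (lcoefN f i) oppr_eq0.
  apply: (inM_trans _ Hx).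
  have := inM_scale (-1) (inM_base Psi (- f)); by rewrite mulrN1z opprK.
move=> Hno.
have HD : forall g h b a r, (g,h) \in Psi -> inSpan (fun _ : lin m => False) r ->
   g *~ b = f *~ a + r -> inM Psi f (g *~ b) ->
   exists a' r', inSpan (fun _ => False) r' /\ h *~ b = f *~ a' + r'.
  move=> g h b a r Hgh Sr E _.
  move: E; rewrite (inSpan_False Sr) addr0 => E.
  case: (b =P 0) => [->|/eqP bn0].
    by exists 0, 0; split; [constructor|rewrite !mulr0z addr0].
  exfalso; apply: Hno; exists (g, h); split => //.
  apply: (parallel Pf _ E bn0).
  exact: (Hd (g, h) Hgh).
have [a [r [Sr Ex]]] := inv_gen HD Hx.
have r0 := inSpan_False Sr; subst r.
case: Nf => i Hi.
have := congr1 (fun q => coef q i) Ex; rewrite addr0 lcoefMz Cx => /esym/eqP.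
rewrite mulf_eq0 (negbTE Hi) /= => /eqP a0.
by rewrite Ex a0 mulr0z addr0.
Qed.

Lemma int_cancel (c a : int) : c != 0 -> c * a = 0 -> a = 0.
Proof. by move=> Hc /eqP; rewrite mulf_eq0 (negbTE Hc) /= => /eqP. Qed.

Lemma X d m (Psi : divsys m) (u : 'cV[int]_d) E cls (s : {perm 'I_m}) :
  gcd_to_div Psi u E cls -> Hyp Psi ->
  (forall i j, cls i = VZ -> cls j = VY -> (s i < s j)%N) ->
  (forall i j, cls i = VY -> cls j = VW -> (s i < s j)%N) ->
  (forall i j, cls i = VZ -> cls j = VW -> (s i < s j)%N) ->
  increasing_for Psi s.
Proof.
move=> [Hd [H2 _]] H zy yw zw k f Pf [Hk Hlv] x; split; last first.
  case=> b ->; split; first exact: inM_scale (inM_base _ _).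
  move=> j; rewrite lcoefMz mulf_eq0 negb_or => /andP [Hj _]; exact: Hlv.
case=> Hx Hpx.
have Nf : nonconstant f by exists k.
have fin : forall a r, x = f *~ a + r -> (forall i, coef r i = 0) -> exists b, x = f *~ b.
  move=> a r Ex Cr; exists a.
  have r0 : r = 0.
    apply: (NC Hd H Pf Nf _ Cr).
    have -> : r = x + f *~ (- a) by rewrite Ex mulrNz addrAC subrr add0r.
    exact: inM_add Hx (inM_scale _ (inM_base _ _)).
  by rewrite Ex r0 addr0.
have rcoef : forall a r i, x = f *~ a + r -> coef x i = 0 -> coef f i = 0 -> coef r i = 0.
  move=> a r i ->; rewrite lcoefD lcoefMz => + Hf; by rewrite Hf mul0r add0r.
have xout : forall i, (s k < s i)%N -> coef x i = 0.
  move=> i Hi; case: (coef x i =P 0) => // /eqP Hn; move: (Hpx i Hn); by rewrite leqNgt Hi.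
have fout : forall i, (s k < s i)%N -> coef f i = 0.
  move=> i Hi; case: (coef f i =P 0) => // /eqP Hn; move: (Hlv i Hn); by rewrite leqNgt Hi.
case Hc: (cls k).
- pose S := fun q : lin m => exists e, e \in Psi /\ q = e.2.
  have HD : forall g h b a r, (g,h) \in Psi -> inSpan S r -> g *~ b = f *~ a + r ->
     inM Psi f (g *~ b) -> exists a' r', inSpan S r' /\ h *~ b = f *~ a' + r'.
    move=> g h b a r Hgh _ _ _; exists 0, (h *~ b); split; last by rewrite mulr0z add0r.
    by apply: spZ; apply: spG; exists (g, h).
  have [a [r [Sr Ex]]] := inv_gen HD Hx.
  apply: (fin a r Ex) => i.
  case Hci: (cls i).
  + apply: (inSpan_coef _ Sr) => q [e [He ->]].
    have [[[_ Hv]|[_ [Hv _]]] _] := H2 e He; apply: (vars_in_coef0 Hv); by rewrite Hci.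
  + by apply: (rcoef a r i Ex); [apply: xout | apply: fout]; apply: zy.
  + by apply: (rcoef a r i Ex); [apply: xout | apply: fout]; apply: zw.
- pose S := fun q : lin m => exists e, e \in Psi /\ vars_in (fun i => cls i = VW) e.2 /\ q = e.2.
  have SW : forall r i, inSpan S r -> cls i <> VW -> coef r i = 0.
    move=> r i Sr Hi; apply: (inSpan_coef _ Sr) => q [e [_ [Hv ->]]].
    exact: (vars_in_coef0 Hv).
  have HD : forall g h b a r, (g,h) \in Psi -> inSpan S r -> g *~ b = f *~ a + r ->
     inM Psi f (g *~ b) -> exists a' r', inSpan S r' /\ h *~ b = f *~ a' + r'.
    move=> g h b a r Hgh Sr Eg Hi.
    have [[[Hg Hh]|[Hg [Hh _]]] _] := H2 _ Hgh; last first.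
      exists 0, (h *~ b); split; last by rewrite mulr0z add0r.
      by apply: spZ; apply: spG; exists (g, h).
    have Sk : coef r k = 0 by apply: SW Sr _; rewrite Hc.
    have gk : coef g k = 0 by apply: (vars_in_coef0 Hg); rewrite /= Hc.
    have a0 : a = 0.
      apply: (int_cancel Hk).
      have := congr1 (fun q => coef q k) Eg.
      by rewrite lcoefD !lcoefMz gk Sk mul0r addr0 => <-.
    have Cgb : is_constant (g *~ b).
      move=> i; case Hci: (cls i).
      + by rewrite Eg a0 mulr0z add0r; apply: SW Sr _; rewrite Hci.
      + by rewrite lcoefMz (vars_in_coef0 Hg) ?mul0r //= Hci.
      + by rewrite lcoefMz (vars_in_coef0 Hg) ?mul0r //= Hci.
    have gb0 := NC Hd H Pf Nf Hi Cgb.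
    have b0 : b = 0 := linMz_eq0 gb0 (Hd _ Hgh).
    by exists 0, 0; split; [constructor | rewrite b0 !mulr0z addr0].
  have [a [r [Sr Ex]]] := inv_gen HD Hx.
  apply: (fin a r Ex) => i.
  case Hci: (cls i).
  + by apply: SW Sr _; rewrite Hci.
  + by apply: SW Sr _; rewrite Hci.
  + by apply: (rcoef a r i Ex); [apply: xout | apply: fout]; apply: yw.
- have HD : forall g h b a r, (g,h) \in Psi -> inSpan (fun _ : lin m => False) r ->
     g *~ b = f *~ a + r -> inM Psi f (g *~ b) ->
     exists a' r', inSpan (fun _ => False) r' /\ h *~ b = f *~ a' + r'.
    move=> g h b a r Hgh Sr Eg Hi.
    move: Eg; rewrite (inSpan_False Sr) addr0 => Eg.
    have gk : coef g k = 0.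
      have [[[Hg _]|[Hg _]] _] := H2 _ Hgh; apply: (vars_in_coef0 Hg); by rewrite /= Hc.
    have a0 : a = 0.
      apply: (int_cancel Hk).
      have := congr1 (fun q => coef q k) Eg.
      by rewrite !lcoefMz gk mul0r => <-.
    have b0 : b = 0 by apply: (linMz_eq0 _ (Hd _ Hgh)); rewrite Eg a0 mulr0z.
    by exists 0, 0; split; [constructor | rewrite b0 !mulr0z addr0].
  have [a [r [Sr Ex]]] := inv_gen HD Hx.
  apply: (fin a r Ex) => i.
  by rewrite (inSpan_False Sr) lcoef0.
Qed.

Lemma lv_ex m (s : {perm 'I_m}) (f : lin m) : nonconstant f -> exists k, lv_is s f k.
Proof.
case=> i Hi.
case: (@arg_maxnP _ i (fun j => coef f j != 0) (fun j => nat_of_ord (s j)) Hi) => k Hk Hmax.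
by exists k; split.
Qed.

Lemma Y m (Psi : divsys m) e f g : e \in Psi -> nonconstant f -> primitive_part_of f e.1 ->
  inM Psi f g -> is_constant g -> g != 0 -> ~ increasing_form Psi.
Proof.
move=> He Nf [_ [Pf _]] Hg Cg gn0 [s Hs].
have [k [Hk Hlv]] := lv_ex s Nf.
have Hin : in_prefix s k g by move=> j; rewrite Cg eqxx.
have [b Eb] := (Hs k f Pf (conj Hk Hlv) g).1 (conj Hg Hin).
have : coef g k = coef f k * b by rewrite Eb lcoefMz.
rewrite Cg => /esym/(int_cancel Hk) b0.
by move/eqP: gn0; apply; rewrite Eb b0 mulr0z.
Qed.

Definition rk (c : vkind) : nat := match c with VZ => 0 | VY => 1 | VW => 2 end.

Lemma ex3 m (cls : 'I_m -> vkind) : exists s : {perm 'I_m},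
  (forall i j, cls i = VZ -> cls j = VY -> (s i < s j)%N) /\
  (forall i j, cls i = VY -> cls j = VW -> (s i < s j)%N) /\
  (forall i j, cls i = VZ -> cls j = VW -> (s i < s j)%N).
Proof.
pose key (i : 'I_m) := (rk (cls i) * m + i)%N.
have keyinj : forall i j, key i = key j -> i = j.
  move=> i j E; apply: val_inj => /=.
  have := congr1 (fun n => n %% m)%N E; rewrite /key !modnMDl !modn_small //.
pose A (i : 'I_m) := [set j | (key j < key i)%N].
have Abnd : forall i, (#|A i| < m)%N.
  move=> i; have : A i \proper [set: 'I_m].
    apply/properP; split; first exact: subsetT.
    by exists i; rewrite ?inE ?ltnn.
  by move/proper_card; rewrite cardsT card_ord.
have Amon : forall i j, (key i < key j)%N -> (#|A i| < #|A j|)%N.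
  move=> i j Hij; apply: proper_card; apply/properP; split.
    by apply/subsetP => x; rewrite !inE => /ltn_trans; apply.
  by exists i; rewrite !inE ?ltnn.
pose sf (i : 'I_m) : 'I_m := Ordinal (Abnd i).
have sinj : injective sf.
  move=> i j /(congr1 val) /= E; apply: keyinj.
  case: (ltngtP (key i) (key j)) => // H; move: (Amon _ _ H); by rewrite E ltnn.
exists (perm sinj); rewrite /=.
have key_lt : forall i j, (rk (cls i) < rk (cls j))%N -> (key i < key j)%N.
  move=> i j H; rewrite /key.
  apply: (@leq_trans (rk (cls i) * m + m)); first by rewrite ltn_add2l.
  by rewrite -mulSnr; apply: (leq_trans _ (leq_addr _ _)); rewrite leq_mul2r H orbT.
split; [|split] => i j Hi Hj; rewrite !permE; apply: Amon; apply: key_lt; by rewrite Hi Hj.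
Qed.

Unset Implicit Arguments.

Theorem mainTheorem16 (d m : nat) (Psi : divsys m) (u : 'cV[int]_d)
    (E : 'M[int]_(d, m)) (cls : 'I_m -> vkind) :
  gcd_to_div Psi u E cls ->
  (~ increasing_form Psi ->
     exists f : lin m, nonconstant f /\
       (exists e, e \in Psi /\ primitive_part_of f e.1) /\
       (exists g : lin m, inM Psi f g /\ is_constant g /\ g != 0)) /\
  (increasing_form Psi ->
     forall s : {perm 'I_m},
       (forall i j, cls i = VZ -> cls j = VY -> (s i < s j)%N) ->
       (forall i j, cls i = VY -> cls j = VW -> (s i < s j)%N) ->
       (forall i j, cls i = VZ -> cls j = VW -> (s i < s j)%N) ->
       increasing_for Psi s).
Proof.
move=> G; split.
- move=> NIF; apply: NNPP => Hno; apply: NIF.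
  have HH : Hyp Psi.
    move=> e f g He Nf Pp Hg Cg; case: (g =P 0) => // /eqP gn0; exfalso; apply: Hno.
    by exists f; split => //; split; [exists e | exists g].
  have [s [h1 [h2 h3]]] := ex3 cls.
  by exists s; exact: X G HH h1 h2 h3.
- move=> IF s h1 h2 h3; apply: (X G _ h1 h2 h3) => e f g He Nf Pp Hg Cg.
  case: (g =P 0) => // /eqP gn0; exfalso; exact: Y He Nf Pp Hg Cg gn0 IF.
Qed.
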